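(* Let $n, N_D, p_1, p_2, r_1, r_2$ be positive integers with $p_1\le N_D$ and $p_2\le N_D$, let $(\boldsymbol{x}^{(i)}, y^{(i)}) \in \mathbb{R}^n\times\mathbb{R}$, $i\in\{1,\dots,N_D\}$, be data points, let $\boldsymbol{g}:\mathbb{R}^n\to\mathbb{R}^{r_1}$, $\boldsymbol{h}:\mathbb{R}^n\to\mathbb{R}^{r_2}$ be continuous, and let $M>0$. Consider the mixed-integer quadratic program $$\min_{\boldsymbol{V},\boldsymbol{W},\alpha^{(i)},\beta^{(i)},\boldsymbol{\gamma}^{(i)},\boldsymbol{\delta}^{(i)}} \sum_{i=1}^{N_D} \big(y^{(i)} - (\alpha^{(i)}-\beta^{(i)})\big)^2$$ over $\boldsymbol{V}\in\mathbb{R}^{p_1\times r_1}$, $\boldsymbol{W}\in\mathbb{R}^{p_2\times r_2}$, subject to, for all $i\in\{1,\dots,N_D\}$: $\alpha^{(i)},\beta^{(i)}\in\mathbb{R}$, $\boldsymbol{V}\boldsymbol{g}(\boldsymbol{x}^{(i)}) \le \boldsymbol{1}\alpha^{(i)}$, $\boldsymbol{V}\boldsymbol{g}(\boldsymbol{x}^{(i)}) + M(\boldsymbol{1}-\boldsymbol{\delta}^{(i)}) \ge \boldsymbol{1}\alpha^{(i)}$, $\sum_{k=1}^{p_1}\boldsymbol{\delta}^{(i)}_k = 1$, $\boldsymbol{\delta}^{(i)}\in\{0,1\}^{p_1}$, $\boldsymbol{W}\boldsymbol{h}(\boldsymbol{x}^{(i)}) \le \boldsymbol{1}\beta^{(i)}$,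 $\boldsymbol{W}\boldsymbol{h}(\boldsymbol{x}^{(i)}) + M(\boldsymbol{1}-\boldsymbol{\gamma}^{(i)}) \ge \boldsymbol{1}\beta^{(i)}$, $\sum_{k=1}^{p_2}\boldsymbol{\gamma}^{(i)}_k = 1$, $\boldsymbol{\gamma}^{(i)}\in\{0,1\}^{p_2}$. Then there exists an optimal solution of this problem satisfying $$\boldsymbol{\delta}^{(i)}_k = 0 \ \text{ for all } i\in\{1,\dots,p_1-1\},\ k\in\{i+1,\dots,p_1\},$$ $$\boldsymbol{\gamma}^{(i)}_k = 0 \ \text{ for all } i\in\{1,\dots,p_2-1\},\ k\in\{i+1,\dots,p_2\},$$ i.e., $\boldsymbol{\delta}^{(1)}_{2:p_1}=\boldsymbol{0}, \boldsymbol{\delta}^{(2)}_{3:p_1}=\boldsymbol{0},\dots,\boldsymbol{\delta}^{(p_1-1)}_{p_1}=0$ and $\boldsymbol{\gamma}^{(1)}_{2:p_2}=\boldsymbol{0},\dots,\boldsymbol{\gamma}^{(p_2-1)}_{p_2}=0$.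
   Context: $\boldsymbol{V}_j$ denotes the $j$-th row of $\boldsymbol{V}$; $\boldsymbol{\delta}^{(i)}_k$ the $k$-th entry of $\boldsymbol{\delta}^{(i)}$ and $\boldsymbol{\delta}^{(i)}_{a:b}$ the subvector of entries $a$ through $b$; $\boldsymbol{1}$ the all-ones vector; vector inequalities are componentwise. *)

(* Defs.v *)
From HB Require Import structures.
From mathcomp Require Import all_boot all_order all_algebra.
From mathcomp Require Import all_classical all_reals all_analysis.
Set Implicit Arguments. Unset Strict Implicit. Unset Printing Implicit Defensive.
Import Order.TTheory GRing.Theory Num.Theory.
Import numFieldNormedType.Exports.
Local Open Scope ring_scope.

Section MIQP.
Variables (R : realType) (n ND p1 r1 p2 r2 : nat).

(* Data point i (0-based, i : 'I_ND) is x i; delta i k is the k-th entry of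
   delta^(i) (row i of the ND x p1 matrix delta); similarly for gamma. *)
Definition miqp_feasible (x : 'I_ND -> 'cV[R]_n)
  (g : 'cV[R]_n -> 'cV[R]_r1) (h : 'cV[R]_n -> 'cV[R]_r2) (M : R)
  (V : 'M[R]_(p1, r1)) (W : 'M[R]_(p2, r2))
  (alpha beta : 'I_ND -> R) (delta : 'M[R]_(ND, p1)) (gamma : 'M[R]_(ND, p2))
  : Prop :=
  forall i : 'I_ND,
    (forall j : 'I_p1, (V *m g (x i)) j 0 <= alpha i) /\
    (forall j : 'I_p1, (V *m g (x i)) j 0 + M * (1 - delta i j) >= alpha i) /\
    (\sum_(k < p1) delta i k = 1) /\
    (forall k : 'I_p1, delta i k = 0 \/ delta i k = 1) /\
    (forall j : 'I_p2, (W *m h (x i)) j 0 <= beta i) /\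
    (forall j : 'I_p2, (W *m h (x i)) j 0 + M * (1 - gamma i j) >= beta i) /\
    (\sum_(k < p2) gamma i k = 1) /\
    (forall k : 'I_p2, gamma i k = 0 \/ gamma i k = 1).

Definition miqp_obj (y : 'I_ND -> R) (alpha beta : 'I_ND -> R) : R :=
  \sum_(i < ND) (y i - (alpha i - beta i)) ^+ 2.

End MIQP.

(* Main.v *)
Require Import Defs.
From HB Require Import structures.
From mathcomp Require Import all_boot all_order all_algebra.
From mathcomp Require Import all_classical all_reals all_analysis.
From mathcomp Require Import fingroup perm.
From mathcomp Require Import ring lra.
Import Order.TTheory GRing.Theory Num.Theory.
Import numFieldNormedType.Exports.
Local Open Scope ring_scope.

Section SymBreak.
Variables (ND p : nat) (f : 'I_ND -> 'I_p).

Let s := [seq f i | i <- enum 'I_ND].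
Let key (j : 'I_p) : nat := if j \in s then index j s else (ND + j)%N.

Lemma key_inj : injective key.
Proof.
move=> j j'; rewrite /key.
have hs : size s = ND by rewrite size_map size_enum_ord.
case: ifP => hj; case: ifP => hj'.
- by move=> E; rewrite -(nth_index j hj) E nth_index.
- by move=> E; have := index_mem j s; rewrite hj hs E; rewrite ltnNge leq_addr.
- by move=> E; have := index_mem j' s; rewrite hj' hs -E; rewrite ltnNge leq_addr.
- by move/eqP; rewrite eqn_add2l => /eqP /val_inj.
Qed.

Let sn (j : 'I_p) : nat := #|[set j' | (key j' < key j)%N]|.

Lemma sn_lt j : (sn j < p)%N.
Proof.
have : (sn j <= #|[set~ j]|)%N.
  rewrite /sn.
  apply/subset_leq_card/fintype.subsetP => j'; rewrite !inE => h.
  by apply/eqP => E; move: h; rewrite E ltnn.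
rewrite cardsC1 card_ord => h; apply: leq_ltn_trans h _.
by case: p j => [[]|q] //.
Qed.

Let sig (j : 'I_p) : 'I_p := Ordinal (sn_lt j).

Lemma sig_inj : injective sig.
Proof.
have H : forall j j', (key j < key j')%N -> (sn j < sn j')%N.
  move=> j j' hlt; rewrite /sn.
  have : (#|j |: [set j'' | (key j'' < key j)%N]| <= #|[set j'' | (key j'' < key j')%N]|)%N.
    apply: subset_leq_card; apply/fintype.subsetP => j''; rewrite !inE.
    by case/orP => [/eqP -> //|h]; apply: ltn_trans h hlt.
  by rewrite cardsU1 inE ltnn /= add1n.
move=> j j' /(congr1 val) /= E.
case: (ltngtP (key j) (key j')) => h.
- by move: (H _ _ h); rewrite E ltnn.
- by move: (H _ _ h); rewrite E ltnn.
- exact: key_inj.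
Qed.

Lemma sig_le (i : 'I_ND) : (sig (f i) <= i)%N.
Proof.
have hs : size s = ND by rewrite size_map size_enum_ord.
have fis : f i \in s by apply: map_f; rewrite mem_enum.
have hk : (key (f i) <= i)%N.
  rewrite /key fis.
  have -> : f i = nth (f i) s i.
    rewrite /s (nth_map i) ?size_enum_ord //; congr f; apply: val_inj; rewrite /= nth_enum_ord. by [].
    exact: ltn_ord.
  by apply: index_nth; rewrite hs.
have hkN : (key (f i) < ND)%N by apply: leq_ltn_trans hk _.
rewrite /= /sn; apply: leq_trans hk.
apply: (@leq_trans (size (take (key (f i)) s))); last by rewrite size_take_min geq_minl.
apply: leq_trans (card_size _).
apply: subset_leq_card; apply/fintype.subsetP => j'; rewrite !inE => h.
rewrite /key in h.
case: ifP h => hj' h.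
- by rewrite in_take // h.
- by exfalso; move: h; rewrite ltnNge (leq_trans (ltnW hkN)) // leq_addr.
Qed.

Definition sigp : {perm 'I_p} := perm sig_inj.

Lemma sigp_le (i : 'I_ND) : (sigp (f i) <= i)%N.
Proof. by rewrite permE; exact: sig_le. Qed.

End SymBreak.
Definition partF (R : realType) (ND p r : nat) (G : 'I_ND -> 'cV[R]_r) (M : R)
  (V : 'M[R]_(p, r)) (al : 'I_ND -> R) (de : 'M[R]_(ND, p)) : Prop :=
  forall i : 'I_ND,
    (forall j : 'I_p, (V *m G i) j 0 <= al i) /\
    (forall j : 'I_p, (V *m G i) j 0 + M * (1 - de i j) >= al i) /\
    (\sum_(k < p) de i k = 1) /\
    (forall k : 'I_p, de i k = 0 \/ de i k = 1).
Arguments partF {R ND p r}.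

Lemma sum_ind (R : realType) p (c : 'I_p) :
  \sum_(k < p) ((k == c)%:R : R) = 1.
Proof.
rewrite (bigD1 c) //= eqxx big1 ?addr0 // => k /negbTE -> //.
Qed.

Lemma partF_one (R : realType) ND p r (G : 'I_ND -> 'cV[R]_r) M (V : 'M[R]_(p, r)) al de :
  partF G M V al de -> forall i, exists j, de i j = 1.
Proof.
move=> H i; have [_ [_ [hs h01]]] := H i.
apply/not_existsP => hn.
have : \sum_(k < p) de i k = 0.
  by apply: big1 => k _; case: (h01 k) => // /hn.
by rewrite hs => /eqP; rewrite oner_eq0.
Qed.

Lemma sym_break (R : realType) ND p r (G : 'I_ND -> 'cV[R]_r) M (V : 'M[R]_(p, r)) al de :
  0 < M -> partF G M V al de ->
  exists V' de', partF G M V' al de' /\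
    forall (i : 'I_ND) (k : 'I_p), (i < k)%N -> de' i k = 0.
Proof.
move=> HM H.
have [f hf] := choice (@partF_one _ _ _ _ _ _ _ _ _ H).
pose sg := @sigp ND p f.
exists (\matrix_(j, k) V (sg^-1 j) k)%g.
exists (\matrix_(i, k) ((k == sg (f i))%:R : R)).
have EV : forall i j, ((\matrix_(j, k) V (sg^-1 j) k)%g *m G i) j 0 = (V *m G i) (sg^-1 j)%g 0.
  by move=> i j; rewrite !mxE; apply: eq_bigr => k _; rewrite mxE.
split.
  move=> i; have [h1 [h2 [h3 h4]]] := H i.
  split; first by move=> j; rewrite EV.
  split.
    move=> j; rewrite EV mxE.
    have [->|hne] := eqVneq j (sg (f i)).
      rewrite permK subrr mulr0 addr0.
      by move: (h2 (f i)); rewrite hf subrr mulr0 addr0.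
    rewrite subr0 mulr1.
    apply: le_trans (h2 (sg^-1 j)%g) _; rewrite lerD2l ler_piMr ?(ltW HM) // lerBlDr lerDl.
    by case: (h4 (sg^-1 j)%g) => ->.
  split; first by under eq_bigr do rewrite mxE; exact: sum_ind.
  by move=> k; rewrite mxE; case: (_ == _); [right|left].
move=> i k hik; rewrite mxE.
have := @sigp_le ND p f i; rewrite -/sg => hle.
case: eqP => // E; exfalso; move: hik; rewrite E ltnNge hle.
done.
Qed.

Section Cont.
Variables (R : realType) (T : topologicalType).

Lemma cont_sum (I : Type) (r : seq I) (F : I -> T -> R) :
  (forall k, continuous (F k)) -> continuous (fun z => \sum_(k <- r) F k z).
Proof.
move=> hF; elim: r => [|a r IH].
  rewrite (_ : (fun z => _) = fun _ => 0); first exact: cst_continuous.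
  by apply: funext => z; rewrite big_nil.
rewrite (_ : (fun z => _) = (F a) + (fun z => \sum_(k <- r) F k z)).
  by move=> z; apply: continuousD; [exact: hF|exact: IH].
by apply: funext => z; rewrite big_cons.
Qed.

Lemma cont_max (I : Type) (r : seq I) (F : I -> T -> R) (f0 : T -> R) :
  continuous f0 -> (forall k, continuous (F k)) ->
  continuous (fun z => \big[Num.max/f0 z]_(k <- r) F k z).
Proof.
move=> h0 hF; elim: r => [|a r IH].
  rewrite (_ : (fun z => _) = f0) //.
  by apply: funext => z; rewrite big_nil.
rewrite (_ : (fun z => _) = (F a) \max (fun z => \big[Num.max/f0 z]_(k <- r) F k z)).
  by move=> z; apply: continuous_max; [exact: hF|exact: IH].
by apply: funext => z; rewrite big_cons.
Qed.

Lemma cont_mul (f g : T -> R) : continuous f -> continuous g ->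
  continuous (fun z => f z * g z).
Proof. by move=> hf hg z; apply: continuousM; [exact: hf|exact: hg]. Qed.

Lemma cont_add (f g : T -> R) : continuous f -> continuous g ->
  continuous (fun z => f z + g z).
Proof. by move=> hf hg z; apply: continuousD; [exact: hf|exact: hg]. Qed.

Lemma cont_opp (f : T -> R) : continuous f -> continuous (fun z => - f z).
Proof. by move=> hf z; apply: continuousN; exact: hf. Qed.

End Cont.

Definition mxc (R : realType) p ND (U : 'M[R]_(p.+1, ND)) (i : 'I_ND) : R :=
  \big[Num.max/U ord0 i]_(j < p.+1) U j i.
Arguments mxc {R p ND}.

Section Mxc.
Variables (R : realType) (p ND : nat).
Implicit Types (U : 'M[R]_(p.+1, ND)).

Lemma mxc_ge U i j : U j i <= mxc U i.
Proof. by rewrite /mxc (bigD1 j) //= le_max lexx. Qed.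

Lemma mxc_arg U i : exists j, mxc U i = U j i.
Proof.
rewrite /mxc; apply: (big_ind (fun v => exists j, v = U j i)).
- by exists ord0.
- move=> a b [ja ->] [jb ->]; case: (leP (U ja i) (U jb i)) => h.
    by exists jb.
  by exists ja.
- by move=> j _; exists j.
Qed.

Lemma mxc_le U i a : (forall j, U j i <= a) -> mxc U i <= a.
Proof. by move=> h; have [j ->] := mxc_arg U i. Qed.

Lemma mxc_shift U U' i c : (forall j, U' j i = c + U j i) -> mxc U' i = c + mxc U i.
Proof.
move=> h; apply: le_anti; apply/andP; split.
  by apply: mxc_le => j; rewrite h lerD2l mxc_ge.
have [j ->] := mxc_arg U i; rewrite -h; exact: mxc_ge.
Qed.

End Mxc.
Arguments mxc_ge {R p ND}.
Arguments mxc_arg {R p ND}.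
Arguments mxc_le {R p ND}.
Arguments mxc_shift {R p ND}.

Definition UG (R : realType) ND p r (G : 'I_ND -> 'cV[R]_r) (V : 'M[R]_(p, r)) : 'M[R]_(p, ND) :=
  \matrix_(j, i) (V *m G i) j 0.
Arguments UG {R ND p r}.

Lemma UGE (R : realType) ND p r (G : 'I_ND -> 'cV[R]_r) (V : 'M[R]_(p, r)) j i :
  UG G V j i = (V *m G i) j 0.
Proof. by rewrite /UG [LHS]mxE. Qed.

Definition SC (R : realType) p ND (M : R) (U : 'M[R]_(p, ND)) : Prop :=
  forall i j k, U k i - U j i <= M.
Arguments SC {R p ND}.

Lemma F1 (R : realType) ND p r (G : 'I_ND -> 'cV[R]_r) M (V : 'M[R]_(p.+1, r)) al de :
  0 < M -> partF G M V al de -> (forall i, al i = mxc (UG G V) i) /\ SC M (UG G V).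
Proof.
move=> HM H.
have [f hf] := choice (@partF_one _ _ _ _ _ _ _ _ _ H).
have Eal : forall i, al i = mxc (UG G V) i.
  move=> i; have [h1 [h2 _]] := H i; apply: le_anti; apply/andP; split.
    apply: le_trans (mxc_ge _ _ (f i)); rewrite UGE.
    by move: (h2 (f i)); rewrite hf subrr mulr0 addr0.
  by apply: mxc_le => j; rewrite UGE.
split => // i j k.
have [h1 [h2 [_ h4]]] := H i.
rewrite !UGE lerBlDr addrC; apply: le_trans (h1 k) _; apply: le_trans (h2 j) _.
rewrite lerD2l ler_piMr ?(ltW HM) // lerBlDr lerDl.
by case: (h4 j) => ->.
Qed.

Lemma F2 (R : realType) ND p r (G : 'I_ND -> 'cV[R]_r) M (V : 'M[R]_(p.+1, r)) :
  0 < M -> SC M (UG G V) -> exists de, partF G M V (mxc (UG G V)) de.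
Proof.
move=> HM H.
have [f hf] := choice (fun i => mxc_arg (UG G V) i).
exists (\matrix_(i, k) ((k == f i)%:R : R)).
move=> i; split.
  by move=> j; have := mxc_ge (UG G V) i j; rewrite UGE.
split.
  move=> j; rewrite mxE; have [->|hne] := eqVneq j (f i).
    by rewrite subrr mulr0 addr0 hf UGE.
  rewrite subr0 mulr1 hf -lerBlDl; have := H i j (f i); by rewrite !UGE.
split; first by under eq_bigr do rewrite mxE; exact: sum_ind.
by move=> k; rewrite mxE; case: (_ == _); [right|left].
Qed.

Definition nsum (R : realType) a b (P : 'M[R]_(a, b)) : R := \sum_i \sum_k `|P i k|.
Arguments nsum {R a b}.

Lemma nsum_ge0 (R : realType) a b (P : 'M[R]_(a, b)) : 0 <= nsum P.
Proof. by apply: sumr_ge0 => i _; apply: sumr_ge0 => k _. Qed.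

Lemma bound_mul (R : realType) a b (u : 'rV[R]_a) (P : 'M[R]_(a, b)) c k :
  0 <= c -> (forall l, `|u 0 l| <= c) -> `|(u *m P) 0 k| <= c * nsum P.
Proof.
move=> c0 hu; rewrite mxE; apply: le_trans (ler_norm_sum _ _ _) _.
rewrite /nsum mulr_sumr; apply: ler_sum => l _.
rewrite normrM; apply: le_trans (ler_wpM2r (normr_ge0 _) (hu l)) _.
apply: ler_wpM2l => //.
by rewrite (bigD1 k) //= lerDl; apply: sumr_ge0.
Qed.

Lemma sq_bound (R : realType) (x K : R) : x ^+ 2 <= K -> `|x| <= 1 + K.
Proof.
move=> h; have e : `|x| ^+ 2 = x ^+ 2 by rewrite real_normK // num_real.
have n0 := normr_ge0 x.
rewrite -e in h; move: h n0; set u := `|x|; move=> h n0.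
nra.
Qed.

Lemma le_sum_abs (R : realType) ND (y : 'I_ND -> R) i : `|y i| <= \sum_j `|y j|.
Proof. by rewrite (bigD1 i) //= lerDl; apply: sumr_ge0. Qed.

Definition Gmx (R : realType) ND r (G : 'I_ND -> 'cV[R]_r) : 'M[R]_(r, ND) :=
  \matrix_(k, i) G i k 0.
Arguments Gmx {R ND r}.

Lemma UG_mul (R : realType) ND p r (G : 'I_ND -> 'cV[R]_r) (V : 'M[R]_(p, r)) :
  UG G V = V *m Gmx G.
Proof.
apply/matrixP => j i; rewrite UGE !mxE; apply: eq_bigr => k _; by rewrite mxE.
Qed.

Definition obj (R : realType) ND p1 r1 p2 r2 (G : 'I_ND -> 'cV[R]_r1) (H : 'I_ND -> 'cV[R]_r2)
  (y : 'I_ND -> R) (V : 'M[R]_(p1.+1, r1)) (W : 'M[R]_(p2.+1, r2)) : R :=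
  miqp_obj y (mxc (UG G V)) (mxc (UG H W)).
Arguments obj {R ND p1 r1 p2 r2}.

Lemma part_rebuild (R : realType) ND p r (G : 'I_ND -> 'cV[R]_r) (M : R)
  (V : 'M[R]_(p.+1, r)) (v0' : 'rV[R]_r) :
  0 <= M -> SC M (UG G V) -> exists V2 : 'M[R]_(p.+1, r),
    (forall i, mxc (UG G V2) i = (v0' *m Gmx G) 0 i + (mxc (UG G V) i - UG G V 0 i)) /\
    SC M (UG G V2) /\
    (forall j k, `|V2 j k| <= `|v0' 0 k| + M * nsum (pinvmx (Gmx G))).
Proof.
move=> HM0 hSC.
set Gm := Gmx G; set U := UG G V.
have hU : U = V *m Gm by rewrite /U UG_mul.
pose VE := V - \matrix_(j, k) V 0 k.
pose UEm := VE *m Gm.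
have hUE : forall j i, UEm j i = U j i - U 0 i.
  move=> j i; rewrite /UEm /VE mulmxBl hU !mxE; congr (_ - _).
  by apply: eq_bigr => k _; rewrite mxE.
pose V2 := \matrix_(j, k) (v0' 0 k + (row j UEm *m pinvmx Gm) 0 k).
have hrow : forall j, row j V2 = v0' + row j UEm *m pinvmx Gm.
  by move=> j; apply/rowP => k; rewrite !mxE.
have hU2 : forall j i, UG G V2 j i = (v0' *m Gm) 0 i + (U j i - U 0 i).
  move=> j i.
  have -> : UG G V2 j i = row j (V2 *m Gm) 0 i by rewrite UG_mul [in RHS]mxE.
  rewrite row_mul hrow mulmxDl mulmxKpV; last by rewrite row_mul submxMl.
  by rewrite mxE [in X in _ + X = _]mxE hUE.
exists V2; split; last split.
- move=> i; rewrite (mxc_shift U (UG G V2) i ((v0' *m Gm) 0 i - U 0 i)); first ring.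
  by move=> j; rewrite hU2; ring.
- by move=> i j k; rewrite !hU2; have := hSC i j k; rewrite -/U; lra.
- move=> j k; rewrite mxE; apply: le_trans (ler_normD _ _) _; rewrite lerD2l.
  apply: bound_mul => //.
  move=> l; rewrite mxE hUE ler_norml; have := hSC l 0 j; have := hSC l j 0; rewrite -/U.
  lra.
Qed.

Section Reduce.
Variables (R : realType) (ND p1 r1 p2 r2 : nat).
Variables (G : 'I_ND -> 'cV[R]_r1) (H : 'I_ND -> 'cV[R]_r2) (y : 'I_ND -> R) (M : R).
Hypothesis HM : 0 < M.

Definition K0 : R := \sum_i (`|y i| + M) ^+ 2.
Definition Qb : R := \sum_i `|y i| + M + 1 + K0.
Definition Bd : R := Qb * nsum (pinvmx (col_mx (Gmx G) (Gmx H))) +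
  M * nsum (pinvmx (Gmx G)) + M * nsum (pinvmx (Gmx H)).

Lemma K0_ge0 : 0 <= K0.
Proof. by apply: sumr_ge0 => i _; rewrite exprn_ge0 // addr_ge0 // ltW. Qed.

Lemma Qb_ge0 : 0 <= Qb.
Proof.
rewrite /Qb; have := K0_ge0; have : 0 <= \sum_i `|y i| by apply: sumr_ge0.
move: HM; lra.
Qed.

Lemma reduce (V : 'M[R]_(p1.+1, r1)) (W : 'M[R]_(p2.+1, r2)) :
  SC M (UG G V) -> SC M (UG H W) ->
  exists (V2 : 'M[R]_(p1.+1, r1)) (W2 : 'M[R]_(p2.+1, r2)), SC M (UG G V2) /\ SC M (UG H W2) /\
    (forall j k, `|V2 j k| <= Bd) /\ (forall j k, `|W2 j k| <= Bd) /\
    obj G H y V2 W2 <= obj G H y V W.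
Proof.
move=> hV hW.
set Gm := Gmx G; set Hm := Gmx H; set C := col_mx Gm Hm.
set U := UG G V; set S := UG H W.
pose mU i := mxc U i - U 0 i.
pose mS i := mxc S i - S 0 i.
have mU0 : forall i, 0 <= mU i /\ mU i <= M.
  move=> i; rewrite /mU subr_ge0 mxc_ge; split => //.
  rewrite lerBlDr; apply: mxc_le => j; have := hV i 0 j; rewrite -/U; lra.
have mS0 : forall i, 0 <= mS i /\ mS i <= M.
  move=> i; rewrite /mS subr_ge0 mxc_ge; split => //.
  rewrite lerBlDr; apply: mxc_le => j; have := hW i 0 j; rewrite -/S; lra.
pose a i := y i - (mU i - mS i).
pose qv : 'rV[R]_ND := \row_i (U 0 i - S 0 i).
have hqv : forall i, qv 0 i = U 0 i - S 0 i by move=> i; rewrite /qv [LHS]mxE.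
have hobj : obj G H y V W = \sum_i (a i - qv 0 i) ^+ 2.
  rewrite /obj /miqp_obj; apply: eq_bigr => i _; rewrite /a /mU /mS hqv -/U -/S.
  congr (_ ^+ 2); ring.
have ha : forall i, `|a i| <= `|y i| + M.
  move=> i; rewrite /a; apply: le_trans (ler_normB _ _) _; rewrite lerD2l ler_norml.
  have := mU0 i; have := mS0 i; lra.
have [q' [hq'C [hq'b hq'le]]] : exists q' : 'rV[R]_ND, (q' <= C)%MS /\
    (forall i, `|q' 0 i| <= Qb) /\
    \sum_i (a i - q' 0 i) ^+ 2 <= \sum_i (a i - qv 0 i) ^+ 2.
  case: (ltP (\sum_i (a i - qv 0 i) ^+ 2) (\sum_i (a i) ^+ 2)) => hlt.
  - exists qv; split; last split => //.
    + have -> : qv = row_mx (row 0 V) (- row 0 W) *m C.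
        rewrite mul_row_col mulNmx -!row_mul -UG_mul -UG_mul -/U -/S.
        by apply/rowP => i; rewrite hqv !mxE.
      exact: submxMl.
    + move=> i.
      have h1 : (a i - qv 0 i) ^+ 2 <= \sum_j (a j - qv 0 j) ^+ 2.
        by rewrite (bigD1 i) //= lerDl; apply: sumr_ge0 => j _; apply: sqr_ge0.
      have h2 : \sum_j (a j) ^+ 2 <= K0.
        apply: ler_sum => j _; have := ha j; have := normr_ge0 (a j).
        rewrite -(real_normK (num_real (a j))); set u := `|a j|; nra.
      have h3 := @sq_bound _ _ _ (le_trans h1 (le_trans (ltW hlt) h2)).
      have h4 : `|qv 0 i| <= `|a i| + `|a i - qv 0 i|.
        by rewrite {1}(_ : qv 0 i = a i - (a i - qv 0 i)); [exact: ler_normB|ring].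
      have h5 := @le_sum_abs _ _ y i.
      have := ha i; rewrite /Qb; lra.
  - exists 0; split; first by rewrite sub0mx.
    split; first by move=> i; rewrite mxE normr0 Qb_ge0.
    by under eq_bigr do rewrite mxE subr0.
pose t := q' *m pinvmx C.
have ht : t *m C = q' by rewrite mulmxKpV.
have htb : forall l, `|t 0 l| <= Qb * nsum (pinvmx C).
  by move=> l; apply: bound_mul => //; exact: Qb_ge0.
have [V2 [hV2m [hV2S hV2b]]] := @part_rebuild _ _ _ _ G M V (lsubmx t) (ltW HM) hV.
have [W2 [hW2m [hW2S hW2b]]] := @part_rebuild _ _ _ _ H M W (- rsubmx t) (ltW HM) hW.
have nPG := @nsum_ge0 _ _ _ (pinvmx Gm); have nPH := @nsum_ge0 _ _ _ (pinvmx Hm).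
exists V2, W2; split => //; split => //; split; last split.
- move=> j k; apply: le_trans (hV2b j k) _; rewrite mxE.
  have := htb (lshift r2 k); rewrite /Bd -/Gm -/Hm -/C.
  have : 0 <= M * nsum (pinvmx Hm) by rewrite mulr_ge0 // ltW.
  lra.
- move=> j k; apply: le_trans (hW2b j k) _.
  rewrite (_ : (- rsubmx t) 0 k = - t 0 (rshift r1 k)); last by rewrite !mxE.
  rewrite normrN.
  have := htb (rshift r1 k); rewrite /Bd -/Gm -/Hm -/C.
  have : 0 <= M * nsum (pinvmx Gm) by rewrite mulr_ge0 // ltW.
  lra.
- rewrite hobj; apply: le_trans hq'le; rewrite le_eqVlt; apply/orP; left; apply/eqP.
  rewrite /obj /miqp_obj; apply: eq_bigr => i _.
  rewrite hV2m hW2m -/U -/S.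
  have hq : q' = lsubmx t *m Gm - (- rsubmx t) *m Hm.
    by rewrite -ht -{1}(hsubmxK t) /C mul_row_col mulNmx opprK.
  have -> : q' 0 i = (lsubmx t *m Gm) 0 i - ((- rsubmx t) *m Hm) 0 i.
    by rewrite hq [LHS]mxE [X in _ + X]mxE.
  rewrite /a /mU /mS; congr (_ ^+ 2); ring.
Qed.

End Reduce.

Local Open Scope classical_set_scope.
Lemma closed_le3 (R : realType) (T : topologicalType) (I J K : Type)
  (F : I -> J -> K -> T -> R) (c : R) :
  (forall i j k, continuous (F i j k)) -> closed [set z | forall i j k, F i j k z <= c].
Proof.
move=> hF.
have -> : [set z | forall i j k, F i j k z <= c] =
  \bigcap_(i in setT) \bigcap_(j in setT) \bigcap_(k in setT) (F i j k @^-1` [set x | x <= c]).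
  apply/seteqP; split => z /=.
    by move=> h i _ j _ k _; exact: h.
  by move=> h i j k; exact: (h i Logic.I j Logic.I k Logic.I).
apply: closed_bigI => i _; apply: closed_bigI => j _; apply: closed_bigI => k _.
apply: preimage_closed; last exact: closed_le.
by move=> z _; exact: hF.
Qed.

Section Assemble.
Variables (R : realType) (ND p1 r1 p2 r2 : nat).
Variables (G : 'I_ND -> 'cV[R]_r1) (H : 'I_ND -> 'cV[R]_r2) (y : 'I_ND -> R) (M : R).
Hypothesis HM : 0 < M.

Let d2 := (p2.+1 * r2)%N.
Let d1 := (p1.+1 * r1)%N.
Definition Vz (z : 'rV[R]_(d1 + d2)) : 'M[R]_(p1.+1, r1) :=
  \matrix_(j, k) z 0 (lshift d2 (mxvec_index j k)).
Definition Wz (z : 'rV[R]_(d1 + d2)) : 'M[R]_(p2.+1, r2) :=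
  \matrix_(j, k) z 0 (rshift d1 (mxvec_index j k)).

Lemma cont_UGV j i : continuous (fun z => UG G (Vz z) j i).
Proof.
rewrite (_ : (fun z : 'rV[R]_(d1 + d2) => _) = fun z : 'rV[R]_(d1 + d2) => \sum_k z 0 (lshift d2 (mxvec_index j k)) * G i k 0).
  apply: cont_sum => k; apply: cont_mul; first exact: coord_continuous.
  exact: cst_continuous.
by apply: funext => z; rewrite UGE mxE; apply: eq_bigr => k _; rewrite mxE.
Qed.

Lemma cont_UGW j i : continuous (fun z => UG H (Wz z) j i).
Proof.
rewrite (_ : (fun z : 'rV[R]_(d1 + d2) => _) = fun z : 'rV[R]_(d1 + d2) => \sum_k z 0 (rshift d1 (mxvec_index j k)) * H i k 0).
  apply: cont_sum => k; apply: cont_mul; first exact: coord_continuous.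
  exact: cst_continuous.
by apply: funext => z; rewrite UGE mxE; apply: eq_bigr => k _; rewrite mxE.
Qed.

Lemma cont_obj : continuous (fun z => obj G H y (Vz z) (Wz z)).
Proof.
rewrite /obj /miqp_obj; apply: cont_sum => i.
have he : continuous (fun z => y i - (mxc (UG G (Vz z)) i - mxc (UG H (Wz z)) i)).
  apply: cont_add; first exact: cst_continuous.
  apply: cont_opp; apply: cont_add; last apply: cont_opp.
    by apply: cont_max => [|j]; apply: cont_UGV.
  by apply: cont_max => [|j]; apply: cont_UGW.
rewrite (_ : (fun z : 'rV[R]_(d1 + d2) => _) = fun z : 'rV[R]_(d1 + d2) => (y i - (mxc (UG G (Vz z)) i - mxc (UG H (Wz z)) i)) *
                                (y i - (mxc (UG G (Vz z)) i - mxc (UG H (Wz z)) i))).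
  exact: cont_mul.
by apply: funext => z; rewrite expr2.
Qed.

End Assemble.
Arguments Vz {R p1 r1 p2 r2}.
Arguments Wz {R p1 r1 p2 r2}.
Arguments cont_UGV {R ND p1 r1 p2 r2}.
Arguments cont_UGW {R ND p1 r1 p2 r2}.
Arguments cont_obj {R ND p1 r1 p2 r2}.
Section Opt.
Variables (R : realType) (ND p1 r1 p2 r2 : nat).
Variables (G : 'I_ND -> 'cV[R]_r1) (H : 'I_ND -> 'cV[R]_r2) (y : 'I_ND -> R) (M : R).
Hypothesis HM : 0 < M.
Local Open Scope classical_set_scope.

Let d2 := (p2.+1 * r2)%N.
Let d1 := (p1.+1 * r1)%N.
Let B := @Bd R ND r1 r2 G H y M.

Lemma B_ge0 : 0 <= B.
Proof.
rewrite /B /Bd; apply: addr_ge0; [apply: addr_ge0|].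
- by apply: mulr_ge0; [apply: Qb_ge0; exact: HM|exact: nsum_ge0].
- by apply: mulr_ge0; [exact: ltW|exact: nsum_ge0].
- by apply: mulr_ge0; [exact: ltW|exact: nsum_ge0].
Qed.

Let box := [set v : 'rV[R]_(d1 + d2) | forall l, `[- B, B]%classic (v ord0 l)].
Let D := box `&` ([set z | forall i j k, UG G (Vz z) k i - UG G (Vz z) j i <= M] `&`
                  [set z | forall i j k, UG H (Wz z) k i - UG H (Wz z) j i <= M]).

Lemma box_closed : closed box.
Proof.
have E : box = [set z | forall (l : 'I_(d1 + d2)) (u v : unit), z 0 l <= B] `&`
                [set z | forall (l : 'I_(d1 + d2)) (u v : unit), - z 0 l <= B].
  apply/seteqP; split => z /=.
    move=> h; split => l _ _; have := h l; rewrite /= in_itv /= => /andP[h1 h2] //.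
    by rewrite lerNl.
  move=> [h1 h2] l; rewrite /= in_itv /=; apply/andP; split; last exact: h1.
  by rewrite lerNl; apply: h2.
rewrite E.
apply: closedI.
  apply: (@closed_le3 R _ _ _ _ (fun l (u v : unit) (z : 'rV[R]_(d1 + d2)) => z 0 l)) => l _ _.
  exact: coord_continuous.
apply: (@closed_le3 R _ _ _ _ (fun l (u v : unit) (z : 'rV[R]_(d1 + d2)) => - z 0 l)) => l _ _.
apply: cont_opp.
exact: coord_continuous.
Qed.

Lemma D_compact : compact D.
Proof.
apply: (@subclosed_compact _ D box); last by move=> z [].
- apply: closedI; first exact: box_closed.
  apply: closedI.
    apply: (@closed_le3 R _ _ _ _ (fun i j k (z : 'rV[R]_(d1 + d2)) => UG G (Vz z) k i - UG G (Vz z) j i)) => i j k.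
    by apply: cont_add; [|apply: cont_opp]; apply: cont_UGV.
  apply: (@closed_le3 R _ _ _ _ (fun i j k (z : 'rV[R]_(d1 + d2)) => UG H (Wz z) k i - UG H (Wz z) j i)) => i j k.
  by apply: cont_add; [|apply: cont_opp]; apply: cont_UGW.
- exact: (@rV_compact _ _ (fun _ => `[- B, B]%classic) (fun _ => @segment_compact _ _ _)).
Qed.
Lemma D_ne : D !=set0.
Proof.
exists 0; split.
  by move=> l; rewrite /= in_itv /= mxE oppr_le0 B_ge0.
have hV : Vz (0 : 'rV[R]_(d1 + d2)) = 0 by apply/matrixP => j k; rewrite !mxE.
have hW : Wz (0 : 'rV[R]_(d1 + d2)) = 0 by apply/matrixP => j k; rewrite !mxE.
split => i j k; rewrite ?hV ?hW !UGE mul0mx !mxE subrr ltW //.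
Qed.

Lemma exists_opt : exists (V : 'M[R]_(p1.+1, r1)) (W : 'M[R]_(p2.+1, r2)),
  SC M (UG G V) /\ SC M (UG H W) /\
  forall (V' : 'M[R]_(p1.+1, r1)) (W' : 'M[R]_(p2.+1, r2)), SC M (UG G V') -> SC M (UG H W') -> obj G H y V W <= obj G H y V' W'.
Proof.
have [c cD cmin] := compact_EVT_min D_ne D_compact (continuous_subspaceT (cont_obj G H y)).
have [_ [hcV hcW]] := set_mem cD.
exists (Vz c), (Wz c); split => //; split => //.
move=> V' W' hV' hW'.
have [V2 [W2 [hV2 [hW2 [bV [bW hle]]]]]] := @reduce R ND p1 r1 p2 r2 G H y M HM _ _ hV' hW'.
pose z2 : 'rV[R]_(d1 + d2) := row_mx (mxvec V2) (mxvec W2).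
have eV : Vz z2 = V2 by apply/matrixP => j k; rewrite mxE row_mxEl mxvecE.
have eW : Wz z2 = W2 by apply/matrixP => j k; rewrite mxE row_mxEr mxvecE.
apply: le_trans hle; rewrite -eV -eW; apply: cmin; apply/mem_set; split; last first.
  by split => i j k /=; rewrite ?eV ?eW; [apply: hV2|apply: hW2].
move=> l; rewrite /= in_itv /= -ler_norml.
rewrite -(splitK l); case: (fintype.split l) => l' /=.
  by case/mxvec_indexP: l' => j k; rewrite row_mxEl mxvecE; exact: bV.
by case/mxvec_indexP: l' => j k; rewrite row_mxEr mxvecE; exact: bW.
Qed.

End Opt.
Arguments exists_opt {R ND p1 r1 p2 r2}.

Lemma feas_split (R : realType) (n ND p1 r1 p2 r2 : nat)
  (x : 'I_ND -> 'cV[R]_n) (g : 'cV[R]_n -> 'cV[R]_r1) (h : 'cV[R]_n -> 'cV[R]_r2) (M : R)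
  (V : 'M[R]_(p1, r1)) (W : 'M[R]_(p2, r2)) al be de ga :
  miqp_feasible x g h M V W al be de ga <->
  partF (fun i => g (x i)) M V al de /\ partF (fun i => h (x i)) M W be ga.
Proof.
rewrite /miqp_feasible /partF; split.
  by move=> Hf; split => i; have := Hf i; tauto.
by move=> [H1 H2] i; have := H1 i; have := H2 i; tauto.
Qed.

Theorem proposition1 (R : realType) (n ND p1 p2 r1 r2 : nat)
  (Hn : (0 < n)%N) (HND : (0 < ND)%N) (Hp1 : (0 < p1)%N) (Hp2 : (0 < p2)%N)
  (Hr1 : (0 < r1)%N) (Hr2 : (0 < r2)%N)
  (Hp1ND : (p1 <= ND)%N) (Hp2ND : (p2 <= ND)%N)
  (x : 'I_ND -> 'cV[R]_n) (y : 'I_ND -> R)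
  (g : 'cV[R]_n -> 'cV[R]_r1) (h : 'cV[R]_n -> 'cV[R]_r2)
  (Hg : continuous g) (Hh : continuous h)
  (M : R) (HM : 0 < M) :
  exists (V : 'M[R]_(p1, r1)) (W : 'M[R]_(p2, r2)) (alpha beta : 'I_ND -> R)
         (delta : 'M[R]_(ND, p1)) (gamma : 'M[R]_(ND, p2)),
    miqp_feasible x g h M V W alpha beta delta gamma /\
    (forall (V' : 'M[R]_(p1, r1)) (W' : 'M[R]_(p2, r2))
            (alpha' beta' : 'I_ND -> R)
            (delta' : 'M[R]_(ND, p1)) (gamma' : 'M[R]_(ND, p2)),
        miqp_feasible x g h M V' W' alpha' beta' delta' gamma' ->
        miqp_obj y alpha beta <= miqp_obj y alpha' beta') /\
    (forall (i : 'I_ND) (k : 'I_p1),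
        (i < p1.-1)%N -> (i < k)%N -> delta i k = 0) /\
    (forall (i : 'I_ND) (k : 'I_p2),
        (i < p2.-1)%N -> (i < k)%N -> gamma i k = 0).
Proof.
case: p1 Hp1 Hp1ND => // p1 _ _; case: p2 Hp2 Hp2ND => // p2 _ _.
pose G := fun i => g (x i); pose H := fun i => h (x i).
have [V [W [hV [hW hopt]]]] := @exists_opt R ND p1 r1 p2 r2 G H y M HM.
have [de hde] := @F2 _ _ _ _ G M V HM hV.
have [ga hga] := @F2 _ _ _ _ H M W HM hW.
have [V' [de' [hV' htri1]]] := @sym_break _ _ _ _ G M V _ _ HM hde.
have [W' [ga' [hW' htri2]]] := @sym_break _ _ _ _ H M W _ _ HM hga.
exists V', W', (mxc (UG G V)), (mxc (UG H W)), de', ga'.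
split; first by apply/feas_split.
split; last by split => i k _; [exact: htri1|exact: htri2].
move=> V2 W2 al be d2 g2 /feas_split [h1 h2].
have [ea hSa] := @F1 _ _ _ _ G M V2 _ _ HM h1.
have [eb hSb] := @F1 _ _ _ _ H M W2 _ _ HM h2.
have -> : al = mxc (UG G V2) by apply: funext => i; exact: ea.
have -> : be = mxc (UG H W2) by apply: funext => i; exact: eb.
exact: hopt.
Qed.
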